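(* Let $\mathcal E$ be a semilattice with zero, $\mathcal B$ a Boolean algebra, $\pi:\mathcal E\to\mathcal B$ a representation, and $\varphi$ a character of $\mathcal E$. Then there exists a character $\chi$ of $\mathcal B$ preserving meets and joins such that $\varphi=\chi\circ\pi$ if and only if $\varphi$ is $\pi$-tight, i.e. for all $n\ge1$ and $x,y_1,\dots,y_n\in\mathcal E$, $$\pi(x)\le\bigvee_{i=1}^n\pi(y_i)\ \Longrightarrow\ \varphi(x)\le\bigvee_{i=1}^n\varphi(y_i).$$
   Context: Boolean algebras need not have a top element: they have finite meets and joins, a bottom element $0$ and relative complements (generalized Boolean algebras). A representation of a semilattice $\mathcal E$ with zero in $\mathcal B$ is a map $\pi$ with $\pi(0)=0$ and $\pi(xy)=\pi(x)\wedge\pi(y)$. A character of $\mathcal E$ is a map $\varphi:\mathcal E\to\{0,1\}$, not identically zero, with $\varphi(0)=0$ and $\varphi(xy)=\varphi(x)\varphi(y)$. A character of $\mathcal B$ preserving meets and joins is a nonzero map $\chi:\mathcal B\to\{0,1\}$ with $\chi(0)=0$, $\chi(a\wedge b)=\chi(a)\wedge\chi(b)$, $\chi(a\vee b)=\chi(a)\vee\chi(b)$. *)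

(* Defs.v *)
(* Semilattice with zero  = bMeetSemilatticeType (meet `&`, zero \bot).
   (Generalized) Boolean algebra, possibly without top
                          = cbDistrLatticeType (bottom, meets, joins,
                            relative complements / difference). *)
From mathcomp Require Import all_boot all_order.
Set Implicit Arguments. Unset Strict Implicit. Unset Printing Implicit Defensive.
Import Order.Theory.
Local Open Scope order_scope.

Definition is_representation d1 (E : bMeetSemilatticeType d1)
    d2 (B : cbDistrLatticeType d2) (pi : E -> B) : Prop :=
  pi \bot = \bot /\ forall x y : E, pi (x `&` y) = pi x `&` pi y.

Definition is_character d1 (E : bMeetSemilatticeType d1) (phi : E -> bool) : Prop :=
  (exists x : E, phi x = true) /\ phi \bot = false /\
  forall x y : E, phi (x `&` y) = phi x && phi y.

Definition is_BA_character d2 (B : cbDistrLatticeType d2) (chi : B -> bool) : Prop :=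
  (exists a : B, chi a = true) /\ chi \bot = false /\
  (forall a b : B, chi (a `&` b) = chi a && chi b) /\
  (forall a b : B, chi (a `|` b) = chi a || chi b).

Definition tight d1 (E : bMeetSemilatticeType d1)
    d2 (B : cbDistrLatticeType d2) (pi : E -> B) (phi : E -> bool) : Prop :=
  forall (n : nat), (0 < n)%N -> forall (x : E) (y : 'I_n -> E),
    pi x <= \join_(i < n) pi (y i) -> phi x <= \join_(i < n) phi (y i).

(* Main.v *)
Require Import Defs.
From mathcomp Require Import all_boot all_order.
From mathcomp Require Import boolp classical_sets.
Set Implicit Arguments. Unset Strict Implicit. Unset Printing Implicit Defensive.
Import Order.Theory.
Local Open Scope order_scope.

Lemma forward15 (d1 : Order.disp_t) (E : bMeetSemilatticeType d1)
    (d2 : Order.disp_t) (B : cbDistrLatticeType d2) (pi : E -> B) (phi : E -> bool) :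
  (exists chi : B -> bool, is_BA_character chi /\ phi = chi \o pi) -> tight pi phi.
Proof.
move=> [chi [[_ [chi0 [chiM chiU]]] ->]] n _ x y hle /=.
have mono : forall a b, a <= b -> chi a <= chi b.
  move=> a b /meet_idPl h; rewrite -{1}h chiM.
  by case: (chi a); case: (chi b).
have := mono _ _ hle.
by rewrite (big_morph chi chiU chi0).
Qed.

Lemma backward15 (d1 : Order.disp_t) (E : bMeetSemilatticeType d1)
    (d2 : Order.disp_t) (B : cbDistrLatticeType d2) (pi : E -> B) (phi : E -> bool) :
  is_representation pi -> is_character phi -> tight pi phi ->
  exists chi : B -> bool, is_BA_character chi /\ phi = chi \o pi.
Proof.
move=> [pi0 piM] [[x0 phix0] [phi0 phiM]] T.
pose I (c : B) := exists s : seq E, all (fun y => ~~ phi y) s /\ c <= \join_(y <- s) pi y.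
pose F (c : B) := exists x, phi x /\ pi x <= c.
have Idown : forall c c', c' <= c -> I c -> I c'.
  by move=> c c' le [s [hs hc]]; exists s; split => //; exact: le_trans hc.
have IU : forall c c', I c -> I c' -> I (c `|` c').
  move=> c c' [s [hs hc]] [s' [hs' hc']]; exists (s ++ s'); split.
    by rewrite all_cat hs hs'.
  by rewrite big_cat /=; exact: leU2.
have Ibot : I \bot by exists [::]; split => //; rewrite big_nil.
have Ipi : forall y, phi y = false -> I (pi y).
  by move=> y hy; exists [:: y]; rewrite /= hy; split => //; rewrite big_seq1.
have FI : forall c, F c -> I c -> False.
  move=> c [x [hx hxc]] [s [hs hc]].
  have hall : all (fun y => ~~ phi y) (\bot :: s) by rewrite /= phi0 hs.
  have e : \join_(i < size (\bot :: s)) pi (nth \bot (\bot :: s) i)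
         = \join_(y <- \bot :: s) pi y.
    by rewrite [RHS](big_nth \bot) big_mkord.
  have := T (size (\bot :: s)) isT x (fun i => nth \bot (\bot :: s) i).
  rewrite e big_cons pi0 join0x (le_trans hxc hc) => /(_ isT).
  rewrite big1 ?hx // => i _.
  by move/all_nthP: hall => /(_ \bot i (ltn_ord i)) /negbTE.
pose filt (X : B -> Prop) := (forall a b, a <= b -> X a -> X b) /\
  (forall a b, X a -> X b -> X (a `&` b)) /\ (forall c, X c -> I c -> False) /\
  ((exists c, X c) -> forall c, F c -> X c).
have [A [[Aup [AM [AI AF]]] Amax]] : exists A, filt A /\ forall B', proper A B' -> ~ filt B'.
  apply: Zorn_bigcup => C CP Ctot; split; [|split; [|split]].
  - by move=> a b ab [X CX Xa]; exists X => //; exact: (CP X CX).1 ab Xa.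
  - move=> a b [X CX Xa] [Y CY Yb]; have [XY|YX] := Ctot X Y CX CY.
    + by exists Y => //; apply: (CP Y CY).2.1 => //; exact: XY.
    + by exists X => //; apply: (CP X CX).2.1 => //; exact: YX.
  - by move=> c [X CX Xc]; exact: (CP X CX).2.2.1.
  - move=> [c [X CX Xc]] c' Fc'; exists X => //; apply: (CP X CX).2.2.2 => //.
    by exists c.
have Fx0 : F (pi x0) by exists x0.
have filtF : filt F.
  split; [|split; [|split]].
  - by move=> a b ab [x [hx hxa]]; exists x; split => //; exact: le_trans hxa ab.
  - move=> a b [x [hx hxa]] [y [hy hyb]]; exists (x `&` y); split.
      by rewrite phiM hx hy.
    by rewrite piM; exact: leI2.
  - exact: FI.
  - by [].
have FA : forall c, F c -> A c.
  case: (pselect (exists c, A c)) => ne; first exact: AF.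
  exfalso; apply: (Amax F) => //; split.
    by move=> c Ac; exfalso; apply: ne; exists c.
  by move=> sub; apply: ne; exists (pi x0); exact: sub.
have gen : forall a, ~ A a -> exists m, A m /\ I (m `&` a).
  move=> a na; pose Aa c := exists m, A m /\ m `&` a <= c.
  apply: contrapT => hn.
  apply: (Amax Aa); first split.
  - by move=> c Ac; exists c; split => //; exact: leIl.
  - move=> sub; apply: na; apply: sub; exists (pi x0); split; first exact: FA.
    exact: leIr.
  - split; [|split; [|split]].
    + by move=> c c' le [m [Am hm]]; exists m; split => //; exact: le_trans hm le.
    + move=> c c' [m [Am hm]] [m' [Am' hm']]; exists (m `&` m'); split.
        exact: AM.
      rewrite lexI; apply/andP; split.
        by apply: le_trans hm; apply: leI2 => //; exact: leIl.
      by apply: le_trans hm'; apply: leI2 => //; exact: leIr.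
    + by move=> c [m [Am hm]] Ic; apply: hn; exists m; split => //; exact: Idown hm Ic.
    + move=> _ c Fc; exists c; split; first exact: FA.
      exact: leIl.
have Aprime : forall a b, A (a `|` b) -> A a \/ A b.
  move=> a b Aab; case: (pselect (A a)) => ha; first by left.
  case: (pselect (A b)) => hb; first by right.
  exfalso.
  have [m1 [Am1 I1]] := gen a ha; have [m2 [Am2 I2]] := gen b hb.
  have Am : A ((m1 `&` m2) `&` (a `|` b)) by apply: (AM) => //; exact: (AM).
  apply: (AI _ Am); apply: Idown (IU _ _ I1 I2).
  rewrite meetUr; apply: leU2; apply: leI2 => //.
    exact: leIl.
  exact: leIr.
exists (fun b => `[< A b >]); split; [split; [|split; [|split]]|].
- by exists (pi x0); apply/asboolP; exact: FA.
- by case: asboolP => // h; exfalso; exact: AI _ h Ibot.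
- move=> a b; apply/asboolP/andP => [h|[/asboolP ha /asboolP hb]].
    by split; apply/asboolP; apply: Aup h; [exact: leIl|exact: leIr].
  exact: AM.
- move=> a b; apply/asboolP/orP => [h|[/asboolP ha|/asboolP hb]].
    by case: (Aprime _ _ h) => h'; [left|right]; apply/asboolP.
    by apply: Aup ha; exact: leUl.
  by apply: Aup hb; exact: leUr.
- apply: funext => y /=; case hy: (phi y).
    by symmetry; apply/asboolP; apply: FA; exists y.
  by case: asboolP => // h; exfalso; exact: AI _ h (Ipi y hy).
Qed.

Theorem theorem15p11 (d1 : Order.disp_t) (E : bMeetSemilatticeType d1)
    (d2 : Order.disp_t) (B : cbDistrLatticeType d2) (pi : E -> B) (phi : E -> bool) :
  is_representation pi -> is_character phi ->
  (exists chi : B -> bool, is_BA_character chi /\ phi = chi \o pi)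
  <-> tight pi phi.
Proof.
move=> hpi hphi; split; first exact: forward15.
exact: backward15.
Qed.
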